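(* Let $x_0,\dots,x_T$ be generated by $x_0=0_n$, $x_{t+1}=\bar A f(x_t)+\bar d_t$ for $t=0,\dots,T-1$. Then $\bar A$ is a global minimizer of $$\min_{A\in\mathbb{R}^{n\times m}} \sum_{t=0}^{T-1}\|(\bar A - A) f(x_t)+\bar d_t\|_2$$ if and only if $$\sum_{t\in\mathcal K}\hat d_t^\top Z^\top f(x_t)\le \sum_{t\in\mathcal K^c}\|Z^\top f(x_t)\|_2\qquad\text{for all } Z\in\mathbb{R}^{m\times n}.$$
   Context: $f:\mathbb{R}^n\to\mathbb{R}^m$ is a given (basis) function, $\bar A\in\mathbb{R}^{n\times m}$ is the ground-truth matrix, and $\bar d_0,\dots,\bar d_{T-1}\in\mathbb{R}^n$ are attack vectors. The attack set is $\mathcal K:=\{t\in\{0,\dots,T-1\}:\bar d_t\neq 0\}$, $\mathcal K^c:=\{0,\dots,T-1\}\setminus\mathcal K$, and $\hat d_t:=\bar d_t/\|\bar d_t\|_2$ for $t\in\mathcal K$. Note the objective equals $\sum_{t=0}^{T-1}\|x_{t+1}-Af(x_t)\|_2$. *)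

(* Defs.v *)
From HB Require Import structures.
From mathcomp Require Import all_boot all_order all_algebra.
From mathcomp Require Import reals.
Set Implicit Arguments. Unset Strict Implicit. Unset Printing Implicit Defensive.
Import Order.TTheory GRing.Theory Num.Theory.
Local Open Scope ring_scope.

Definition dotv (R : realType) (k : nat) (u v : 'cV[R]_k) : R :=
  \sum_(i < k) u i 0 * v i 0.
Definition norm2 (R : realType) (k : nat) (v : 'cV[R]_k) : R :=
  Num.sqrt (\sum_(i < k) v i 0 ^+ 2).

Fixpoint traj (R : realType) (n m : nat) (A : 'M[R]_(n, m))
  (f : 'cV[R]_n -> 'cV[R]_m) (d : nat -> 'cV[R]_n) (t : nat) : 'cV[R]_n :=
  match t with
  | 0 => 0
  | t'.+1 => A *m f (traj A f d t') + d t'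
  end.

Definition objective (R : realType) (n m T : nat) (Abar : 'M[R]_(n, m))
  (f : 'cV[R]_n -> 'cV[R]_m) (d : nat -> 'cV[R]_n) (A : 'M[R]_(n, m)) : R :=
  \sum_(t < T) norm2 ((Abar - A) *m f (traj Abar f d t) + d t).

Definition dhat (R : realType) (n : nat) (d : nat -> 'cV[R]_n) (t : nat) : 'cV[R]_n :=
  (norm2 (d t))^-1 *: d t.

(* Main.v *)
Require Import Defs.
From HB Require Import structures.
From mathcomp Require Import all_boot all_order all_algebra.
From mathcomp Require Import reals.
From mathcomp Require Import ring lra.
Import Order.TTheory GRing.Theory Num.Theory.
Local Open Scope ring_scope.
Set Implicit Arguments. Unset Strict Implicit.
Section S.
Variable R : realType.
Variable k : nat.
Implicit Types u v w : 'cV[R]_k.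

Lemma dotvC u v : dotv u v = dotv v u.
Proof. by apply: eq_bigr => i _; rewrite mulrC. Qed.
Lemma dotvDl u w v : dotv (u + w) v = dotv u v + dotv w v.
Proof. by rewrite /dotv -big_split; apply: eq_bigr => i _; rewrite mxE mulrDl. Qed.
Lemma dotvZl (a : R) u v : dotv (a *: u) v = a * dotv u v.
Proof. by rewrite /dotv mulr_sumr; apply: eq_bigr => i _; rewrite mxE mulrA. Qed.
Lemma dotvNl u v : dotv (- u) v = - dotv u v.
Proof. by rewrite -scaleN1r dotvZl mulN1r. Qed.
Lemma dotv_ge0 v : 0 <= dotv v v.
Proof. by apply: sumr_ge0 => i _; rewrite -expr2 sqr_ge0. Qed.
Lemma norm2E v : norm2 v = Num.sqrt (dotv v v).
Proof. by rewrite /norm2 /dotv; congr Num.sqrt; apply: eq_bigr => i _; rewrite expr2. Qed.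
Lemma norm2_ge0 v : 0 <= norm2 v.
Proof. by rewrite norm2E sqrtr_ge0. Qed.
Lemma norm2_sq v : norm2 v ^+ 2 = dotv v v.
Proof. by rewrite norm2E sqr_sqrtr // dotv_ge0. Qed.
Lemma dotv_eq0 v : dotv v v = 0 -> v = 0.
Proof.
move=> /eqP; rewrite /dotv psumr_eq0 => [/allP H|i _]; last by rewrite -expr2 sqr_ge0.
apply/matrixP => i j; rewrite (ord1 j) mxE.
have := H i (mem_index_enum i); rewrite /= -expr2 sqrf_eq0 => /eqP //.
Qed.
Lemma dot_expand u w (c : R) :
  dotv (u + c *: w) (u + c *: w) = dotv u u + 2 * c * dotv u w + c ^+ 2 * dotv w w.
Proof.
rewrite dotvDl dotvZl !(dotvC _ (u + c *: w)) !dotvDl !dotvZl (dotvC w u); ring.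
Qed.
Lemma CS u w : dotv u w ^+ 2 <= dotv u u * dotv w w.
Proof.
have [u0|unz] := eqVneq (dotv u u) 0.
  have z : forall x : 'cV[R]_k, dotv 0 x = 0 by move=> x; rewrite /dotv big1 // => i _; rewrite mxE mul0r.
  by rewrite (dotv_eq0 u0) !z expr0n /= mul0r.
have upos : 0 < dotv u u by rewrite lt_def unz dotv_ge0.
have := dotv_ge0 (w + (- (dotv u w / dotv u u)) *: u).
rewrite dot_expand (dotvC w u).
set a := dotv u u; set c := dotv u w; set b := dotv w w => H.
have E : b + 2 * - (c / a) * c + (- (c / a)) ^+ 2 * a = b - c ^+ 2 / a.
  by field; rewrite unz.
rewrite E subr_ge0 ler_pdivrMr // in H.
by rewrite mulrC.
Qed.
Lemma CSn u w : dotv u w <= norm2 u * norm2 w.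
Proof.
have := CS u w; rewrite -!norm2_sq -exprMn => H.
have p0 : 0 <= norm2 u * norm2 w by rewrite mulr_ge0 // norm2_ge0.
move: H p0; set p := norm2 u * norm2 w; set c := dotv u w; nra.
Qed.
Lemma dotvDr u w v : dotv v (u + w) = dotv v u + dotv v w.
Proof. by rewrite !(dotvC v) dotvDl. Qed.
Lemma dotvNr u v : dotv v (- u) = - dotv v u.
Proof. by rewrite !(dotvC v) dotvNl. Qed.
Lemma norm2N v : norm2 (- v) = norm2 v.
Proof. by rewrite !norm2E dotvNl dotvNr opprK. Qed.
Lemma norm2Z (e : R) v : 0 <= e -> norm2 (e *: v) = e * norm2 v.
Proof.
move=> e0; rewrite !norm2E dotvZl dotvC dotvZl mulrA -expr2 sqrtrM ?sqr_ge0 //.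
by rewrite sqrtr_sqr ger0_norm.
Qed.
Lemma norm2_0 : norm2 (0 : 'cV[R]_k) = 0.
Proof. by rewrite norm2E /dotv big1 ?sqrtr0 // => i _; rewrite mxE mul0r. Qed.
Lemma norm2_gt0 v : v != 0 -> 0 < norm2 v.
Proof.
move=> vnz; rewrite lt_def norm2_ge0 andbT; apply: contraNneq vnz => H.
by apply/eqP; apply: dotv_eq0; rewrite -norm2_sq H expr0n.
Qed.
Lemma perterm v d (e : R) : d != 0 ->
  norm2 (d - e *: v) <= norm2 d - e * ((norm2 d)^-1 * dotv d v)
                        + e ^+ 2 * (dotv v v / norm2 d).
Proof.
move=> dnz; have Dp := norm2_gt0 dnz.
have Dn : norm2 d != 0 by rewrite gt_eqF.
have -> : d - e *: v = d + (- e) *: v by rewrite scaleNr.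
have N0 := norm2_ge0 (d + (- e) *: v).
have N2 := norm2_sq (d + (- e) *: v).
rewrite dot_expand -norm2_sq in N2.
have H1 := dotv_ge0 (d + (- (e / 2)) *: v).
rewrite dot_expand -norm2_sq in H1.
have q0 := dotv_ge0 v.
move: N0 N2 H1 q0.
set D := norm2 d; set N := norm2 (d + (- e) *: v); set p := dotv d v; set q := dotv v v.
move=> N0 N2 H1 q0.
set Rh := D - e * (D^-1 * p) + e ^+ 2 * (q / D).
have E1 : D * Rh = D ^+ 2 + 2 * - (e / 2) * p + (- (e / 2)) ^+ 2 * q + 3 / 4 * e ^+ 2 * q.
  by rewrite /Rh; field.
have R0 : 0 <= Rh.
  have h : 0 <= e ^+ 2 * q by rewrite mulr_ge0 ?sqr_ge0.
  have : 0 <= D * Rh by rewrite E1; lra.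
  by rewrite pmulr_rge0.
have E2 : Rh ^+ 2 - N ^+ 2 = (e * p / D - e ^+ 2 * q / D) ^+ 2 + e ^+ 2 * q.
  by rewrite N2 /Rh; field.
have : 0 <= Rh ^+ 2 - N ^+ 2 by rewrite E2; apply: addr_ge0; rewrite ?sqr_ge0 // mulr_ge0 ?sqr_ge0.
move=> h; nra.
Qed.
Lemma dhat_le (d w : 'cV[R]_k) : d != 0 -> dotv ((norm2 d)^-1 *: d) w <= norm2 w.
Proof.
move=> dnz; apply: le_trans (CSn _ _) _.
have Dp := norm2_gt0 dnz.
rewrite norm2Z; last by rewrite invr_ge0 ltW.
by rewrite mulVf ?gt_eqF // mul1r.
Qed.
Lemma dhat_d (d : 'cV[R]_k) : d != 0 -> dotv ((norm2 d)^-1 *: d) d = norm2 d.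
Proof.
move=> dnz; have Dp := norm2_gt0 dnz.
by rewrite dotvZl -norm2_sq expr2 mulrA mulVf ?gt_eqF // mul1r.
Qed.
End S.

Unset Implicit Arguments. Set Strict Implicit.

Theorem theorem1 (R : realType) (n m T : nat) (f : 'cV[R]_n -> 'cV[R]_m)
  (Abar : 'M[R]_(n, m)) (d : nat -> 'cV[R]_n) :
  (forall A : 'M[R]_(n, m), objective T Abar f d Abar <= objective T Abar f d A)
  <->
  (forall Z : 'M[R]_(m, n),
     \sum_(t < T | d t != 0) dotv (dhat d t) (Z^T *m f (traj Abar f d t))
     <= \sum_(t < T | d t == 0) norm2 (Z^T *m f (traj Abar f d t))).
Proof.
set fx := fun t => f (traj Abar f d t).
have obj0 : objective T Abar f d Abar = \sum_(t < T) norm2 (d t).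
  by rewrite /objective; apply: eq_bigr => t _; rewrite subrr mul0mx add0r.
rewrite /dhat; split.
- move=> H Z; set W := Z^T.
  pose S := \sum_(t < T | d t == 0) norm2 (W *m fx t).
  pose a := \sum_(t < T | d t != 0) dotv ((norm2 (d t))^-1 *: d t) (W *m fx t).
  pose C := \sum_(t < T | d t != 0) (dotv (W *m fx t) (W *m fx t) / norm2 (d t)).
  have C0 : 0 <= C.
    apply: sumr_ge0 => t dt; rewrite divr_ge0 ?dotv_ge0 //; exact: norm2_ge0.
  have key : forall e, 0 < e -> a <= S + e * C.
    move=> e e0.
    have := H (Abar + e *: W); rewrite obj0 /objective.
    have EA : Abar - (Abar + e *: W) = - (e *: W) by rewrite opprD addrA subrr add0r.
    rewrite EA.
    pose h := fun t : 'I_T => if d t != 0 then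
       - e * ((norm2 (d t))^-1 * dotv (d t) (W *m fx t))
       + e ^+ 2 * (dotv (W *m fx t) (W *m fx t) / norm2 (d t))
       else e * norm2 (W *m fx t).
    have Hle : \sum_(t < T) norm2 (- (e *: W) *m f (traj Abar f d t) + d t)
            <= \sum_(t < T) (norm2 (d t) + h t).
      apply: ler_sum => t _; rewrite /h -/(fx t) mulNmx -scalemxAl addrC.
      case: (eqVneq (d t) 0) => [->|dnz] /=.
        rewrite sub0r norm2N norm2Z; last exact: ltW.
        by rewrite norm2_0 add0r.
      have := perterm (W *m fx t) e dnz; lra.
    move=> H1; have H2 := le_trans H1 Hle.
    rewrite big_split /= lerDl in H2.
    have Eh : \sum_(t < T) h t = e * (S + e * C - a).
      rewrite (bigID (fun t : 'I_T => d t != 0)) /=.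
      rewrite [X in X + _](eq_bigr (fun t : 'I_T => - e * ((norm2 (d t))^-1 * dotv (d t) (W *m fx t))
         + e ^+ 2 * (dotv (W *m fx t) (W *m fx t) / norm2 (d t)))); last first.
        by move=> t; rewrite /h; case: (d t == 0).
      rewrite [X in _ + X](eq_bigr (fun t : 'I_T => e * norm2 (W *m fx t))); last first.
        by move=> t; rewrite /h; case: (d t == 0).
      rewrite big_split /= -!mulr_sumr.
      have -> : \sum_(i < T | ~~ (d i != 0)) norm2 (W *m fx i) = S.
        by apply: eq_bigl => t; case: (d t == 0).
      have -> : \sum_(i < T | d i != 0) (norm2 (d i))^-1 * dotv (d i) (W *m fx i) = a.
        by apply: eq_bigr => t _; rewrite dotvZl.
      rewrite -/S -/C; ring.
    rewrite Eh pmulr_rge0 // in H2; lra.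
  apply/ler_addgt0Pr => e e0.
  have C1 : 0 < C + 1 by lra.
  have := key (e / (C + 1)) (divr_gt0 e0 C1).
  have : e / (C + 1) * C <= e.
    rewrite mulrAC ler_pdivrMr //; nra.
  move=> h1 h2; change (a <= S + e); lra.
- move=> H A; rewrite obj0 /objective.
  set B := Abar - A.
  have := H (- B)^T; rewrite trmxK => HB.
  pose g := fun t : 'I_T => if d t != 0
      then dotv ((norm2 (d t))^-1 *: d t) (- B *m fx t) else - norm2 (- B *m fx t).
  have Eg : \sum_(t < T) g t =
     \sum_(t < T | d t != 0) dotv ((norm2 (d t))^-1 *: d t) (- B *m fx t)
     - \sum_(t < T | d t == 0) norm2 (- B *m fx t).
    rewrite (bigID (fun t : 'I_T => d t != 0)) /=.
    rewrite [X in X + _](eq_bigr (fun t : 'I_T => dotv ((norm2 (d t))^-1 *: d t) (- B *m fx t))); last first.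
      by move=> t; rewrite /g; case: (d t == 0).
    rewrite [X in _ + X](eq_bigr (fun t : 'I_T => - norm2 (- B *m fx t))); last first.
      by move=> t; rewrite /g; case: (d t == 0).
    rewrite sumrN.
    have -> : \sum_(i < T | ~~ (d i != 0)) norm2 (- B *m fx i)
       = \sum_(t < T | d t == 0) norm2 (- B *m fx t).
      by apply: eq_bigl => t; case: (d t == 0).
    by [].
  have Hg : \sum_(t < T) g t <= 0 by rewrite Eg subr_le0.
  apply: le_trans (_ : \sum_(t < T) (norm2 (B *m fx t + d t) + g t) <= _).
    apply: ler_sum => t _; rewrite /g.
    case: (eqVneq (d t) 0) => [->|dnz] /=.
      by rewrite norm2_0 addr0 mulNmx norm2N subrr.
    have := dhat_le (B *m fx t + d t) dnz.
    rewrite dotvDr dhat_d // mulNmx dotvNr; lra.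
  rewrite big_split /=; lra.
Qed.
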